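(* Let $D=pq$ with $p\neq q$ odd primes, let $r$ be a positive integer with $2rD$ square-free, and let $d$ be a (possibly negative) integer with $d\mid rD$. Let $C_d$ be the curve $W^2=d+\frac{8rD}{d}Z^4$. Then: (1) $C_d(\mathbb{Q}_2)\neq\emptyset$ if and only if $d\equiv1\pmod 8$; (2) for any prime $t\mid \frac{rD}{d}$, $C_d(\mathbb{Q}_t)\neq\emptyset$ if and only if $\left(\frac{d}{t}\right)=1$; (3) for any prime $l\mid d$, $C_d(\mathbb{Q}_l)\neq\emptyset$ if and only if $\left(\frac{2rD/d}{l}\right)=1$.
   Context: $\left(\frac{\cdot}{\cdot}\right)$ denotes the Legendre symbol; $C_d(\mathbb{Q}_v)$ denotes the set of $\mathbb{Q}_v$-points $(Z,W)$ of the affine curve. *)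

(* Defs.v *)
From HB Require Import structures.
From mathcomp Require Import all_boot all_order all_algebra.
Set Implicit Arguments. Unset Strict Implicit. Unset Printing Implicit Defensive.
Import Order.TTheory GRing.Theory Num.Theory.
Local Open Scope ring_scope.

Definition squarefree (n : nat) : Prop :=
  forall t : nat, prime t -> (logn t n <= 1)%N.

Definition legendre (a : int) (l : nat) : int :=
  if (l%:Z %| a)%Z then 0
  else if [exists x : 'I_l, ((x%:Z) ^+ 2 == a %[mod l%:Z])%Z] then 1 else -1.

(* p-adic integers as compatible sequences of integer residues:
   x represents the element lim x n, with x n.+1 = x n mod p^n. *)
Definition padic_int (p : nat) (x : nat -> int) : Prop :=
  forall n : nat, (x n.+1 = x n %[mod (p%:Z) ^+ n])%Z.

Definition padic_eq (p : nat) (x y : nat -> int) : Prop :=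
  forall n : nat, (x n = y n %[mod (p%:Z) ^+ n])%Z.

(* C(Q_p) != empty for the affine curve  W^2 = d + c Z^4  (d, c integers).
   Every element of Q_p is z / p^a with z in Z_p; writing Z = z/p^a,
   W = w/p^b and clearing the (nonzero) denominator p^(4a+2b), the equation
   becomes  w^2 p^(4a) = d p^(4a+2b) + c z^4 p^(2b)  in Z_p. *)
Definition has_Qp_point (p : nat) (d c : int) : Prop :=
  exists (a b : nat) (z w : nat -> int),
    padic_int p z /\ padic_int p w /\
    padic_eq p (fun n => w n ^+ 2 * (p%:Z) ^+ (4 * a))
               (fun n => d * (p%:Z) ^+ (4 * a + 2 * b)
                         + c * z n ^+ 4 * (p%:Z) ^+ (2 * b)).

(* the coefficient 8rD/d of the curve C_d (an integer since d | rD) *)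
Definition Cd_coef (r D : nat) (d : int) : int := ((8 * r * D)%:Z %/ d)%Z.

(* Main.v *)
Require Import Defs.
From HB Require Import structures.
From mathcomp Require Import all_boot all_order all_algebra.
From mathcomp Require Import zify ring lra.
From Stdlib Require Import ClassicalEpsilon.
Import Order.TTheory GRing.Theory Num.Theory.
Local Open Scope ring_scope.
Section Build.
Variable p : nat.
Variable Q : nat -> int -> Prop.
Variable x0 : int.
Hypothesis h0 : Q 0%N x0.
Hypothesis hst : forall k x, Q k x -> exists y, Q k.+1 y /\ (p%:Z ^+ k %| y - x)%Z.

Definition stp k x (h : Q k x) : {y | Q k.+1 y /\ (p%:Z ^+ k %| y - x)%Z} :=
  constructive_indefinite_description _ (hst k x h).

Fixpoint gseq (k : nat) : {x | Q k x} :=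
  match k with
  | 0%N => exist _ x0 h0
  | k'.+1 => let: exist x hx := gseq k' in
             exist _ (proj1_sig (stp k' x hx)) (proj1 (proj2_sig (stp k' x hx)))
  end.

Lemma build_seq : exists f, padic_int p f /\ forall k, Q k (f k).
Proof.
exists (fun k => proj1_sig (gseq k)); split; last by move=> k; case: (gseq k).
move=> n /=; apply/eqP; rewrite eqz_mod_dvd.
case: (gseq n) => x hx /=.
by case: (proj2_sig (stp n x hx)).
Qed.
End Build.

Lemma hensel_odd (t : nat) (A s0 : int) : prime t ->
  ~~ (t%:Z %| 2 * s0)%Z -> (t%:Z %| s0 ^+ 2 - A)%Z ->
  exists f, padic_int t f /\ forall k, (t%:Z ^+ k %| f k ^+ 2 - A)%Z.
Proof.
move=> ht hs0 hA.
pose Q k x := (t%:Z ^+ k.+1 %| x ^+ 2 - A)%Z /\ ~~ (t%:Z %| 2 * x)%Z.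
have [f [hf hQ]] : exists f, padic_int t f /\ forall k, Q k (f k).
  apply: (@build_seq t Q s0); first by split => //; rewrite expr1.
  move=> k x [hx h2x].
  have /coprimezP [[u v] /= huv] : coprimez (2 * x) t%:Z.
    rewrite coprimezE absz_nat coprime_sym prime_coprime //.
  case/dvdzP: hx => qq hq.
  set X := t%:Z ^+ k in hq *.
  pose y := x - qq * u * (X * t%:Z).
  have eA : A = x ^+ 2 - qq * (X * t%:Z) by rewrite -exprSr -hq; ring.
  exists y; split; first split.
  + apply/dvdzP; exists (qq * v + qq ^+ 2 * u ^+ 2 * X).
    have -> : t%:Z ^+ k.+2 = X * t%:Z * t%:Z by rewrite /X !exprSr.
    rewrite /y eA.
    apply/eqP; rewrite -subr_eq0; apply/eqP.
    have -> : (x - qq * u * (X * t%:Z)) ^+ 2 - (x ^+ 2 - qq * (X * t%:Z)) -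
      (qq * v + qq ^+ 2 * u ^+ 2 * X) * (X * t%:Z * t%:Z) =
      qq * X * t%:Z * (1 - (u * (2 * x) + v * t%:Z)) by ring.
    by rewrite huv subrr mulr0.
  + apply: contra h2x => hy.
    have -> : 2 * x = 2 * y + t%:Z * (2 * qq * u * X) by rewrite /y; ring.
    by apply: rpredD => //; apply: dvdz_mulr.
  + have -> : y - x = X * (- qq * u * t%:Z) by rewrite /y; ring.
    exact: dvdz_mulr.
exists f; split => // k; case: (hQ k) => h _.
  by apply: dvdz_trans h; apply: dvdz_exp2l.
Qed.

Lemma hensel2 (A : int) : (8 %| A - 1)%Z ->
  exists f, padic_int 2 f /\ forall k, ((2%N)%:Z ^+ k %| f k ^+ 2 - A)%Z.
Proof.
move=> hA.
have e3 : forall k, (2%N)%:Z ^+ k.+3 = (2%N)%:Z ^+ k * 8.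
  by move=> k; rewrite !exprSr -!mulrA.
pose Q k x := ((2%N)%:Z ^+ k.+3 %| x ^+ 2 - A)%Z /\ ~~ ((2%N)%:Z %| x)%Z.
have [f [hf hQ]] : exists f, padic_int 2 f /\ forall k, Q k (f k).
  apply: (@build_seq 2 Q 1).
    split; last by [].
    rewrite e3 expr0 mul1r.
    by move: hA; clear; lia.
  move=> k x [hx h2x].
  case/dvdzP: hx => qq hq.
  rewrite e3 in hq.
  set X := (2%N)%:Z ^+ k in hq *.
  case: (boolP ((2%N)%:Z %| qq)%Z) => hq2.
    exists x; split; last by rewrite subrr dvdz0.
    split => //; rewrite e3 exprSr hq.
    case/dvdzP: hq2 => q' ->.
    apply/dvdzP; exists q'; rewrite exprSr -/X; ring.
  have [m hm] : exists m, qq + x = 2 * m.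
    exists ((qq + x) %/ 2)%Z; move: hq2 h2x; clear; lia.
  exists (x + X * 4); split; first split.
  + rewrite e3 exprSr; apply/dvdzP; exists (m + X).
    have -> : (x + X * 4) ^+ 2 - A = (x ^+ 2 - A) + 8 * X * (x + 2 * X) by ring.
    rewrite hq.
    have -> : qq * (X * 8) + 8 * X * (x + 2 * X) = 8 * X * (qq + x) + 16 * X * X by ring.
    rewrite hm exprSr -/X; ring.
  + apply: contra h2x => hy.
    have -> : x = (x + X * 4) - X * 4 by ring.
    apply: rpredB => //; apply: dvdz_mull.
    by apply/dvdzP; exists 2.
  + have -> : x + X * 4 - x = X * 4 by ring.
    exact: dvdz_mulr.
exists f; split => // k; case: (hQ k) => h _.
  apply: (dvdz_trans _ h); apply: dvdz_exp2l; clear; lia.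
Qed.
Section Pad.
Variable p : nat.
Hypothesis hp : prime p.
Local Notation P := (p%:Z).

Lemma P_neq0 : P != 0.
Proof. by rewrite eqz_nat -lt0n prime_gt0. Qed.

Lemma PX_neq0 n : P ^+ n != 0.
Proof. exact: expf_neq0 P_neq0. Qed.

Lemma decomp (x : int) (N : nat) : (P ^+ N %| x)%Z \/
  exists k u, (k < N)%N /\ x = P ^+ k * u /\ ~~ (P %| u)%Z.
Proof.
elim: N => [|N IH]; first by left; rewrite expr0 dvd1z.
case: IH => [/dvdzP [y ->]|[k [u [hk [-> hu]]]]]; last first.
  by right; exists k, u; split => //; apply: ltnW.
case: (boolP (P %| y)%Z) => hy.
  by left; rewrite exprS; apply: dvdz_mul.
by right; exists N, y; rewrite mulrC; split.
Qed.

Lemma dvd_transfer {s N : nat} {A B : int} : (s <= N)%N ->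
  (P ^+ N %| A - B)%Z -> (P ^+ s %| A)%Z -> (P ^+ s %| B)%Z.
Proof.
move=> sN hN hA.
have hs : (P ^+ s %| A - B)%Z by apply: dvdz_trans hN; apply: dvdz_exp2l.
have -> : B = A - (A - B) by ring.
by apply: rpredB.
Qed.

Lemma dvd_transfer' {s N : nat} {A B : int} : (s <= N)%N ->
  (P ^+ N %| A - B)%Z -> (P ^+ s %| B)%Z -> (P ^+ s %| A)%Z.
Proof.
move=> sN hN hB.
have hs : (P ^+ s %| A - B)%Z by apply: dvdz_trans hN; apply: dvdz_exp2l.
have -> : A = (A - B) + B by ring.
by apply: rpredD.
Qed.

Lemma cancelP (h s : nat) (y : int) : (P ^+ (h + s) %| P ^+ h * y)%Z -> (P ^+ s %| y)%Z.
Proof. by rewrite exprD dvdz_mul2l // PX_neq0. Qed.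

Lemma cancel1 (h : nat) (y : int) : (P ^+ h.+1 %| P ^+ h * y)%Z -> (P %| y)%Z.
Proof. by rewrite -addn1 => /cancelP; rewrite expr1. Qed.

Lemma EuclidZ (x y : int) : (P %| x * y)%Z -> (P %| x)%Z || (P %| y)%Z.
Proof. by rewrite !dvdzE abszM absz_nat Euclid_dvdM. Qed.

Lemma EuclidZ2 (x : int) : (P %| x ^+ 2)%Z -> (P %| x)%Z.
Proof. by rewrite expr2 => /EuclidZ /orP [] . Qed.

Lemma shapeP (a k : nat) (w : int) :
  P ^+ a * (P ^+ k * w) ^+ 2 = P ^+ (a + 2 * k) * w ^+ 2.
Proof. by rewrite exprMn -exprM exprD mulrA mulnC. Qed.

Lemma dvd_hi {s a : nat} (W : int) : (s <= a)%N -> (P ^+ s %| P ^+ a * W)%Z.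
Proof. by move=> h; apply: dvdz_mulr; apply: dvdz_exp2l. Qed.

Lemma L_odd (f N e : nat) (u W : int) : (2 * f + 1 < N)%N -> ~~ (P %| u)%Z ->
  (P ^+ N %| P ^+ (2 * e) * W ^+ 2 - P ^+ (2 * f + 1) * u)%Z -> False.
Proof.
move=> hN hu hd.
have hi : forall a (w : int), (2 * f + 2 <= a)%N ->
    P ^+ (2 * e) * W ^+ 2 = P ^+ a * w -> False.
  move=> a w ha E; rewrite E in hd.
  have h1 : ((2 * f + 1).+1 <= N)%N by clear -hN; lia.
  have h2 : ((2 * f + 1).+1 <= a)%N by clear -ha; lia.
  have := dvd_transfer h1 hd (dvd_hi w h2).
  by move=> /cancel1; rewrite (negbTE hu).
case: (decomp W (f + 1)) => [/dvdzP [y E]|[k [w [hk [E hw]]]]].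
  apply: (hi (2 * e + 2 * (f + 1)) (y ^+ 2)); first by clear; lia.
  by rewrite E (mulrC y) shapeP.
rewrite E shapeP in hd.
case: (leqP (2 * f + 2) (2 * e + 2 * k)) => hek.
  by apply: (hi _ _ hek); rewrite E shapeP.
have h1 : ((2 * e + 2 * k).+1 <= N)%N by clear -hN hek; lia.
have h2 : ((2 * e + 2 * k).+1 <= 2 * f + 1)%N by clear -hek; lia.
have := dvd_transfer' h1 hd (dvd_hi u h2).
by move=> /cancel1 /EuclidZ2; rewrite (negbTE hw).
Qed.

Lemma L_even (f r N e : nat) (v W : int) : (0 < r)%N -> (2 * f + r <= N)%N ->
  ~~ (P %| v)%Z ->
  (P ^+ N %| P ^+ (2 * e) * W ^+ 2 - P ^+ (2 * f) * v)%Z ->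
  exists x, (P ^+ r %| x ^+ 2 - v)%Z /\ ~~ (P %| x)%Z.
Proof.
move=> hr hN hv hd.
have hi : forall a (w : int), (2 * f + 1 <= a)%N ->
    P ^+ (2 * e) * W ^+ 2 = P ^+ a * w -> False.
  move=> a w ha E; rewrite E in hd.
  have h1 : ((2 * f).+1 <= N)%N by clear -hN hr; lia.
  have ha' : ((2 * f).+1 <= a)%N by clear -ha; lia.
  have := dvd_transfer h1 hd (dvd_hi w ha').
  by move=> /cancel1; rewrite (negbTE hv).
case: (decomp W (f + 1)) => [/dvdzP [y E]|[k [w [hk [E hw]]]]].
  exfalso; apply: (hi (2 * e + 2 * (f + 1)) (y ^+ 2)); first by clear; lia.
  by rewrite E (mulrC y) shapeP.
rewrite E shapeP in hd.
case: (ltngtP (2 * e + 2 * k) (2 * f)) => hek.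
- have h1 : ((2 * e + 2 * k).+1 <= N)%N by clear -hN hek; lia.
  have := dvd_transfer' h1 hd (dvd_hi v hek).
  by move=> /cancel1 /EuclidZ2; rewrite (negbTE hw).
- exfalso; apply: (hi (2 * e + 2 * k) (w ^+ 2)); first by clear -hek; lia.
  by rewrite E shapeP.
- exists w; split => //.
  rewrite hek -mulrBr in hd.
  apply: (@cancelP (2 * f)).
  apply: dvdz_trans hd; apply: dvdz_exp2l; clear -hN; lia.
Qed.

End Pad.
Lemma point_of (p : nat) (d c z0 : int) (f : nat -> int) : padic_int p f ->
  (forall k, (p%:Z ^+ k %| f k ^+ 2 - (d + c * z0 ^+ 4)))%Z -> has_Qp_point p d c.
Proof.
move=> hf hk; exists 0%N, 0%N, (fun _ => z0), f; split => //; split => //.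
move=> n; rewrite !muln0 !expr0 !mulr1; apply/eqP; rewrite eqz_mod_dvd.
exact: hk.
Qed.

Lemma pt_cong (p : nat) (d c : int) : has_Qp_point p d c -> exists a b : nat,
  forall N, exists W Z : int, (p%:Z ^+ N %| p%:Z ^+ (2 * (2 * a)) * W ^+ 2 -
     (d * p%:Z ^+ (4 * a + 2 * b) + c * Z ^+ 4 * p%:Z ^+ (2 * b)))%Z.
Proof.
case=> a [b [z [w [_ [_ he]]]]]; exists a, b => N.
exists (w N), (z N); move: (he N) => /eqP; rewrite eqz_mod_dvd.
by rewrite mulnA mulrC.
Qed.

Lemma legendre1P (a : int) (l : nat) : prime l ->
  legendre a l = 1 <-> ~~ (l%:Z %| a)%Z /\ exists x, (l%:Z %| x ^+ 2 - a)%Z.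
Proof.
move=> hl; rewrite /legendre; case: ifP => hd.
  by split => //; case.
have l0 : (0 < l)%N by apply: prime_gt0.
case: ifP => he.
  split => // _; split => //; case/existsP: he => x /eqP hx.
  by exists x%:Z; rewrite -eqz_mod_dvd; apply/eqP.
split => //; case=> _ [x hx]; move/negbT: he => /existsP; case.
have hlt : (`|(x %% l%:Z)%Z| < l)%N.
  have := modz_ge0 x (_ : l%:Z != 0); have := ltz_pmod x (_ : 0 < l%:Z).
  move: l0; clear; lia.
exists (Ordinal hlt) => /=.
have -> : (`|(x %% l%:Z)%Z|%N)%:Z = (x %% l%:Z)%Z.
  by rewrite abszE ger0_norm // modz_ge0 // eqz_nat -lt0n.
by rewrite modzXm; move: hx; rewrite -eqz_mod_dvd.
Qed.

Lemma odd_sq (x : int) : ~~ (2 %| x)%Z -> (8 %| x ^+ 2 - 1)%Z.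
Proof.
move=> hx.
have [m hm] : exists m, x = 2 * m + 1 by exists ((x - 1) %/ 2)%Z; move: hx; clear; lia.
have [s [hs|hs]] : exists s, m = 2 * s \/ m = 2 * s + 1.
  by exists (m %/ 2)%Z; clear; lia.
- apply/dvdzP; exists (s * (2 * s + 1)); rewrite hm hs; ring.
- apply/dvdzP; exists ((2 * s + 1) * (s + 1)); rewrite hm hs; ring.
Qed.

Lemma sqf_no2 (n t : nat) : (0 < n)%N -> prime t ->
  (forall t : nat, prime t -> (logn t n <= 1)%N) -> ~~ (t * t %| n)%N.
Proof.
move=> n0 ht hs; apply/negP => h.
have h2 : (t ^ 2 %| n)%N by rewrite expnS expn1.
rewrite (pfactor_dvdn 2 ht n0) in h2.
by move: h2 (hs t ht); clear; lia.
Qed.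

Lemma expMl (x : int) (n m : nat) : x ^+ (n * m) = (x ^+ m) ^+ n.
Proof. by rewrite mulnC exprM. Qed.

Lemma unit_add (p : nat) (x y : int) : ~~ (p%:Z %| x)%Z -> (p%:Z %| y)%Z -> ~~ (p%:Z %| x + y)%Z.
Proof.
move=> hx hy; apply: contra hx => hxy.
have -> : x = (x + y) - y by ring.
by apply: rpredB.
Qed.

Lemma unit_mul (p : nat) (x y : int) : prime p -> ~~ (p%:Z %| x)%Z -> ~~ (p%:Z %| y)%Z -> ~~ (p%:Z %| x * y)%Z.
Proof.
move=> hp hx hy; apply/negP => /(@EuclidZ p hp _ _) /orP [] h.
  by rewrite h in hx.
by rewrite h in hy.
Qed.

Lemma unit_exp (p : nat) (x : int) (n : nat) : prime p -> ~~ (p%:Z %| x)%Z -> ~~ (p%:Z %| x ^+ n)%Z.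
Proof.
move=> hp hx; elim: n => [|n IH]; last by rewrite exprS; apply: unit_mul.
rewrite expr0 dvdzE /= dvdn1; apply/eqP => h.
by move: (prime_gt1 hp); rewrite h.
Qed.

Lemma dvd_PS (p : nat) (n : nat) (y : int) : (p%:Z %| p%:Z ^+ n.+1 * y)%Z.
Proof. by rewrite exprS -mulrA; apply: dvdz_mulr. Qed.
Theorem lemma2p1 (p q r : nat) (d : int) :
  prime p -> prime q -> odd p -> odd q -> p != q ->
  (0 < r)%N -> squarefree (2 * r * (p * q)) ->
  (d %| (r * (p * q))%:Z)%Z ->
  [/\ (has_Qp_point 2 d (Cd_coef r (p * q) d) <-> (d = 1 %[mod 8])%Z),
      (forall t : nat, prime t -> (t%:Z %| ((r * (p * q))%:Z %/ d))%Z ->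
         (has_Qp_point t d (Cd_coef r (p * q) d) <-> legendre d t = 1))
    & (forall l : nat, prime l -> (l%:Z %| d)%Z ->
         (has_Qp_point l d (Cd_coef r (p * q) d) <->
          legendre (((2 * r * (p * q))%:Z %/ d)%Z) l = 1))].
Proof.
move=> hp hq op oq pq r0 hsq hdR.
have R0 : (0 < r * (p * q))%N by rewrite !muln_gt0 r0 !prime_gt0.
have nosq : forall t, prime t -> ~~ (t * t %| 2 * (r * (p * q)))%N.
  move=> t ht; apply: sqf_no2 => //; first by rewrite muln_gt0.
  by rewrite mulnA.
have Rodd : ~~ ((2%N)%:Z %| (r * (p * q))%:Z)%Z.
  apply/negP; rewrite dvdzE !absz_nat => h2.
  by move: (nosq 2%N isT); rewrite dvdn_mul.
set R := (r * (p * q))%N in R0 nosq Rodd hdR *.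
set g := ((R%:Z) %/ d)%Z.
have hRg : R%:Z = g * d by rewrite divzK.
have d0 : d != 0 by apply/eqP => d0; move: hRg; rewrite d0 mulr0; move: R0; clear; lia.
have hc : Cd_coef r (p * q) d = 8 * g.
  by rewrite /Cd_coef -mulnA -/R PoszM mulz_divA.
have he : ((2 * r * (p * q))%:Z %/ d)%Z = 2 * g.
  by rewrite -mulnA -/R PoszM mulz_divA.
rewrite he hc.
have key : forall t, prime t -> (t%:Z %| d)%Z -> (t%:Z %| g)%Z -> False.
  move=> t ht h1 h2; move: (nosq t ht); rewrite dvdn_mull //.
  have : (t%:Z * t%:Z %| g * d)%Z by apply: dvdz_mul.
  by rewrite -hRg dvdzE abszM !absz_nat.
have gR : (g %| R%:Z)%Z by rewrite hRg dvdz_mulr.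
have dR : (d %| R%:Z)%Z by rewrite hRg dvdz_mull.
have not2 : forall t, prime t -> (t%:Z %| R%:Z)%Z -> ~~ (t%:Z %| 2)%Z.
  move=> t ht htR; apply/negP => h2.
  have t2 : (t <= 2)%N by apply: (dvdn_leq _ h2).
  have t2' : t = 2%N by move: (prime_gt1 ht) t2; clear; lia.
  by move: htR Rodd; rewrite t2' => ->.
split.
-
  have dodd : ~~ ((2%N)%:Z %| d)%Z.
    by apply: contra Rodd => h; apply: dvdz_trans h dR.
  have godd : ~~ ((2%N)%:Z %| g)%Z.
    by apply: contra Rodd => h; apply: dvdz_trans h gR.
  have e8 : (2%N)%:Z ^+ 3 = 8 by [].
  split.
  + move/pt_cong => [a [b hN]].
    case: (hN (4 * a + 2 * b + 3)%N) => W [Z hd].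
    case: (@decomp 2 Z a) => [/dvdzP [z' hz]|[k [u [hk [hz hu]]]]].
    * have E : d * (2%N)%:Z ^+ (4 * a + 2 * b) + 8 * g * Z ^+ 4 * (2%N)%:Z ^+ (2 * b)
          = (2%N)%:Z ^+ (2 * (2 * a + b)) * (d + 2 * (4 * g * z' ^+ 4)).
        by rewrite hz; rewrite ?(exprD, expMl); ring.
      rewrite E in hd.
      have hv : ~~ ((2%N)%:Z %| d + 2 * (4 * g * z' ^+ 4))%Z.
        by apply: unit_add => //; apply: dvdz_mulr.
      have hle : (2 * (2 * a + b) + 3 <= 4 * a + 2 * b + 3)%N by clear; lia.
      have [x [hx1 hx2]] := @L_even 2 isT _ 3 _ _ _ W isT hle hv hd.
      rewrite e8 in hx1.
      have hs8 := odd_sq x hx2.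
      apply/eqP; rewrite eqz_mod_dvd.
      move: hx1 hs8; move: (x ^+ 2) (g * z' ^+ 4) => X G; clear; lia.
    * have [j hj] : exists j, a = (k + 1 + j)%N by exists (a - k - 1)%N; clear -hk; lia.
      have E : d * (2%N)%:Z ^+ (4 * a + 2 * b) + 8 * g * Z ^+ 4 * (2%N)%:Z ^+ (2 * b)
          = (2%N)%:Z ^+ (2 * (b + 2 * k + 1) + 1) * (g * u ^+ 4 + 2 * (d * (2%N)%:Z ^+ (4 * j))).
        by rewrite hz hj; rewrite ?(exprD, expMl); ring.
      rewrite E in hd.
      have hv : ~~ ((2%N)%:Z %| g * u ^+ 4 + 2 * (d * (2%N)%:Z ^+ (4 * j)))%Z.
        apply: unit_add; last by apply: dvdz_mulr.
        by apply: unit_mul => //; apply: unit_exp.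
      have hlt : (2 * (b + 2 * k + 1) + 1 < 4 * a + 2 * b + 3)%N by clear -hj; lia.
      by case: (@L_odd 2 isT _ _ _ _ W hlt hv hd).
  + move=> h8.
    have h8' : (8 %| d - 1)%Z by move/eqP: h8; rewrite eqz_mod_dvd.
    have [f [hf hk]] := hensel2 d h8'.
    apply: (@point_of 2 d (8 * g) 0 f hf) => k.
    by have -> : d + 8 * g * 0 ^+ 4 = d by ring.
-
  move=> t ht htg.
  have tR : (t%:Z %| R%:Z)%Z by apply: dvdz_trans htg gR.
  have t2 := not2 t ht tR.
  have tnd : ~~ (t%:Z %| d)%Z by apply/negP => h; apply: (key t ht h htg).
  case/dvdzP: htg => g' hg'.
  have tg' : ~~ (t%:Z %| g')%Z.
    apply/negP => h; move: (nosq t ht); rewrite dvdn_mull //.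
    have : (t%:Z * t%:Z %| g' * t%:Z * d)%Z by apply: dvdz_mulr; apply: dvdz_mul.
    by rewrite -hg' -hRg dvdzE abszM !absz_nat.
  have t8 : ~~ (t%:Z %| 8)%Z.
    have h8 : ~~ (t%:Z %| 2 * 2 * 2)%Z by apply: unit_mul => //; apply: unit_mul.
    exact: h8.
  have hc' : 8 * g = t%:Z * (8 * g') by rewrite hg'; ring.
  rewrite hc'.
  split.
  + move/pt_cong => [a [b hN]].
    case: (hN (4 * a + 2 * b + 1)%N) => W [Z hd].
    case: (@decomp t Z a) => [/dvdzP [z' hz]|[k [u [hk [hz hu]]]]].
    * have E : d * t%:Z ^+ (4 * a + 2 * b) + t%:Z * (8 * g') * Z ^+ 4 * t%:Z ^+ (2 * b)
          = t%:Z ^+ (2 * (2 * a + b)) * (d + t%:Z * (8 * g' * z' ^+ 4)).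
        by rewrite hz; rewrite ?(exprD, expMl); ring.
      rewrite E in hd.
      have hv : ~~ (t%:Z %| d + t%:Z * (8 * g' * z' ^+ 4))%Z.
        by apply: unit_add => //; apply: dvdz_mulr.
      have hle : (2 * (2 * a + b) + 1 <= 4 * a + 2 * b + 1)%N by clear; lia.
      have [x [hx1 hx2]] := @L_even t ht _ 1 _ _ _ W isT hle hv hd.
      apply/(legendre1P _ _ ht); split => //; exists x.
      rewrite expr1 in hx1.
      have -> : x ^+ 2 - d = (x ^+ 2 - (d + t%:Z * (8 * g' * z' ^+ 4))) + t%:Z * (8 * g' * z' ^+ 4) by ring.
      by apply: rpredD => //; apply: dvdz_mulr.
    * have [j hj] : exists j, a = (k + 1 + j)%N by exists (a - k - 1)%N; clear -hk; lia.
      have E : d * t%:Z ^+ (4 * a + 2 * b) + t%:Z * (8 * g') * Z ^+ 4 * t%:Z ^+ (2 * b)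
          = t%:Z ^+ (2 * (2 * k + b) + 1) * (8 * g' * u ^+ 4 + t%:Z * (d * t%:Z ^+ (4 * j + 2))).
        by rewrite hz hj; rewrite ?(exprD, expMl); ring.
      rewrite E in hd.
      have hv : ~~ (t%:Z %| 8 * g' * u ^+ 4 + t%:Z * (d * t%:Z ^+ (4 * j + 2)))%Z.
        apply: unit_add; last by apply: dvdz_mulr.
        by apply: unit_mul => //; [apply: unit_mul | apply: unit_exp].
      have hlt : (2 * (2 * k + b) + 1 < 4 * a + 2 * b + 1)%N by clear -hj; lia.
      by case: (@L_odd t ht _ _ _ _ W hlt hv hd).
  + move/(legendre1P _ _ ht) => [_ [x hx]].
    have tx : ~~ (t%:Z %| x)%Z.
      apply/negP => h; move/negP: tnd; apply.
      have -> : d = x ^+ 2 - (x ^+ 2 - d) by ring.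
      by apply: rpredB => //; apply: dvdz_exp.
    have [f [hf hk]] := hensel_odd t d x ht (@unit_mul t _ _ ht t2 tx) hx.
    apply: (@point_of t d _ 0 f hf) => k.
    by have -> : d + t%:Z * (8 * g') * 0 ^+ 4 = d by ring.
-
  move=> l hl hld.
  have lR : (l%:Z %| R%:Z)%Z by apply: dvdz_trans hld dR.
  have l2 := not2 l hl lR.
  have lng : ~~ (l%:Z %| g)%Z by apply/negP => h; apply: (key l hl hld h).
  case/dvdzP: hld => d' hd'.
  have ld' : ~~ (l%:Z %| d')%Z.
    apply/negP => h; move: (nosq l hl); rewrite dvdn_mull //.
    have : (l%:Z * l%:Z %| g * (d' * l%:Z))%Z by apply: dvdz_mull; apply: dvdz_mul.
    by rewrite -hd' -hRg dvdzE abszM !absz_nat.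
  have l8 : ~~ (l%:Z %| 8)%Z.
    have h8 : ~~ (l%:Z %| 2 * 2 * 2)%Z by apply: unit_mul => //; apply: unit_mul.
    exact: h8.
  have lc : ~~ (l%:Z %| 8 * g)%Z by apply: unit_mul.
  split.
  + move/pt_cong => [a [b hN]].
    case: (hN (4 * a + 2 * b + 2)%N) => W [Z hd].
    case: (@decomp l Z a.+1) => [/dvdzP [z' hz]|[k [u [hk [hz hu]]]]].
    * rewrite -addn1 in hz.
      have E : d * l%:Z ^+ (4 * a + 2 * b) + 8 * g * Z ^+ 4 * l%:Z ^+ (2 * b)
          = l%:Z ^+ (2 * (2 * a + b) + 1) * (d' + l%:Z * (8 * g * z' ^+ 4 * l%:Z ^+ 2)).
        by rewrite hz hd'; rewrite ?(exprD, expMl); ring.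
      rewrite E in hd.
      have hv : ~~ (l%:Z %| d' + l%:Z * (8 * g * z' ^+ 4 * l%:Z ^+ 2))%Z.
        by apply: unit_add => //; apply: dvdz_mulr.
      have hlt : (2 * (2 * a + b) + 1 < 4 * a + 2 * b + 2)%N by clear; lia.
      by case: (@L_odd l hl _ _ _ _ W hlt hv hd).
    * have [j hj] : exists j, a = (k + j)%N by exists (a - k)%N; clear -hk; lia.
      have E : d * l%:Z ^+ (4 * a + 2 * b) + 8 * g * Z ^+ 4 * l%:Z ^+ (2 * b)
          = l%:Z ^+ (2 * (2 * k + b)) * (8 * g * u ^+ 4 + l%:Z * (d' * l%:Z ^+ (4 * j))).
        by rewrite hz hj hd'; rewrite ?(exprD, expMl); ring.
      rewrite E in hd.
      have hv : ~~ (l%:Z %| 8 * g * u ^+ 4 + l%:Z * (d' * l%:Z ^+ (4 * j)))%Z.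
        apply: unit_add; last by apply: dvdz_mulr.
        by apply: unit_mul => //; apply: unit_exp.
      have hle : (2 * (2 * k + b) + 1 <= 4 * a + 2 * b + 2)%N by clear -hj; lia.
      have [x [hx1 hx2]] := @L_even l hl _ 1 _ _ _ W isT hle hv hd.
      rewrite expr1 in hx1.
      have hx : (l%:Z %| x ^+ 2 - 8 * g * u ^+ 4)%Z.
        have -> : x ^+ 2 - 8 * g * u ^+ 4 = (x ^+ 2 - (8 * g * u ^+ 4 + l%:Z * (d' * l%:Z ^+ (4 * j)))) + l%:Z * (d' * l%:Z ^+ (4 * j)) by ring.
        by apply: rpredD => //; apply: dvdz_mulr.
      have h2u : ~~ (l%:Z %| 2 * u ^+ 2)%Z by apply: unit_mul => //; apply: unit_exp.
      have /coprimezP [[s v] /= hsv] : coprimez (2 * u ^+ 2) l%:Z.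
        by rewrite coprimezE absz_nat coprime_sym prime_coprime.
      apply/(legendre1P _ _ hl); split; first by apply: unit_mul.
      exists (s * x).
      have -> : (s * x) ^+ 2 - 2 * g = s ^+ 2 * (x ^+ 2 - 8 * g * u ^+ 4)
          - l%:Z * (2 * g * v * (s * (2 * u ^+ 2) + 1))
          + 2 * g * (s * (2 * u ^+ 2) + 1) * ((s * (2 * u ^+ 2) + v * l%:Z) - 1) by ring.
      rewrite hsv subrr mulr0 addr0.
      by apply: rpredB; [apply: dvdz_mull | apply: dvdz_mulr].
  + move/(legendre1P _ _ hl) => [_ [x hx]].
    have lx : ~~ (l%:Z %| x)%Z.
      apply/negP => h.
      have h2g : ~~ (l%:Z %| 2 * g)%Z by apply: unit_mul.
      move/negP: h2g; apply.
      have -> : 2 * g = x ^+ 2 - (x ^+ 2 - 2 * g) by ring.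
      by apply: rpredB => //; apply: dvdz_exp.
    have hs : (l%:Z %| (2 * x) ^+ 2 - (d + 8 * g * 1 ^+ 4))%Z.
      have -> : (2 * x) ^+ 2 - (d + 8 * g * 1 ^+ 4) = 4 * (x ^+ 2 - 2 * g) - d' * l%:Z.
        by rewrite hd'; ring.
      by apply: rpredB; [apply: dvdz_mull | apply: dvdz_mull].
    have [f [hf hk]] := hensel_odd l _ (2 * x) hl (@unit_mul l _ _ hl l2 (@unit_mul l _ _ hl l2 lx)) hs.
    exact: (@point_of l d _ 1 f hf).
Qed.
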